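(* Let $R$ be a local ring with stable regular maximal ideal $M$, let $R_1=E(M)$, and suppose $R\subseteq R_1$ is a quadratic extension and $R_1$ is a local ring with maximal ideal $M_1$. Let $R_2=E(M_1)$. (1) If $R_1\neq R_2$, then $M_1=MR_2$, $M_1$ is a stable ideal of $R_1$, and $R_1=R+M_1$. (2) If $R_1=R_2$, then $M_1$ is a principal ideal of $R_1$ and $R_1=R+xR$ for every $x\in R_1\setminus R$.
   Context: All rings are commutative with identity; a local ring is a ring with a unique maximal ideal (not necessarily Noetherian). $Q(R)$ is the total ring of quotients. An ideal is regular if it contains a nonzerodivisor. For a regular fractional ideal $I$ of a ring $A$ (an $A$-submodule of $Q(A)$ containing a nonzerodivisor with $bI\subseteq A$ for some nonzerodivisor $b$), $E(I)=\{q\in Q(A):qI\subseteq I\}$, and $I$ is stable if it is projective as an $E(I)$-module. An extension $R\subseteq S$ is quadratic if $xy\in xR+yR+R$ for all $x,y\in S$. *)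

(* Defs.v *)
(* All rings live inside one ambient commutative ring Q,
   which is assumed to be the total ring of quotients of the base ring R.
   Subrings, ideals, fractional ideals are predicates (Q -> Prop). *)
From HB Require Import structures.
From mathcomp Require Import all_boot all_order all_algebra.
Set Implicit Arguments. Unset Strict Implicit. Unset Printing Implicit Defensive.
Import GRing.Theory.
Local Open Scope ring_scope.

Section Defs.
Variable Q : comNzRingType.

Definition same_set (A B : Q -> Prop) : Prop := forall x, A x <-> B x.

Definition subring (A : Q -> Prop) : Prop :=
  [/\ A 0, A 1, (forall x y, A x -> A y -> A (x + y)),
      (forall x, A x -> A (- x)) & (forall x y, A x -> A y -> A (x * y))].

Definition ideal_of (A I : Q -> Prop) : Prop :=
  [/\ (forall x, I x -> A x), I 0, (forall x y, I x -> I y -> I (x + y))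
    & (forall a x, A a -> I x -> I (a * x))].

Definition proper_ideal (A I : Q -> Prop) : Prop := ideal_of A I /\ ~ I 1.

Definition maximal_ideal (A I : Q -> Prop) : Prop :=
  proper_ideal A I /\
  forall J, proper_ideal A J -> (forall x, I x -> J x) -> same_set J I.

(* local ring: a ring with a unique maximal ideal (not necessarily Noetherian) *)
Definition local_ring (A : Q -> Prop) : Prop :=
  subring A /\
  exists M, maximal_ideal A M /\ forall N, maximal_ideal A N -> same_set N M.

Definition nzd (A : Q -> Prop) (r : Q) : Prop :=
  A r /\ forall s, A s -> r * s = 0 -> s = 0.

Definition total_quotient_ring (R : Q -> Prop) : Prop :=
  [/\ subring R,
      (forall r, nzd R r -> exists u, r * u = 1)
    & (forall q, exists a b u, [/\ R a, nzd R b, b * u = 1 & q = a * u])].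

Definition regular_ideal (A I : Q -> Prop) : Prop := exists r, I r /\ nzd A r.

Definition E (I : Q -> Prop) : Q -> Prop := fun q => forall x, I x -> I (q * x).

(* I is a projective S-module (S a subring of Q, I an S-submodule of Q):
   I is a direct summand (retract) of a free S-module S^(J), whose elements
   are the finitely supported functions J -> Q with values in S. *)
Definition free_elt (S : Q -> Prop) (J : Type) (f : J -> Q) : Prop :=
  (forall j, S (f j)) /\
  exists (n : nat) (e : 'I_n -> J), forall j, (forall i, e i <> j) -> f j = 0.

Definition projective_over (S I : Q -> Prop) : Prop :=
  exists (J : Type) (alpha : Q -> J -> Q) (beta : (J -> Q) -> Q),
  [/\ (forall x, I x -> free_elt S (alpha x)),
      (forall x y, I x -> I y -> forall j, alpha (x + y) j = alpha x j + alpha y j)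
    & (forall s x, S s -> I x -> forall j, alpha (s * x) j = s * alpha x j)] /\
  [/\ (forall f, free_elt S f -> I (beta f)),
      (forall f g, free_elt S f -> free_elt S g ->
                   beta (fun j => f j + g j) = beta f + beta g),
      (forall s f, S s -> free_elt S f -> beta (fun j => s * f j) = s * beta f)
    & (forall x, I x -> beta (alpha x) = x)].

Definition stable (I : Q -> Prop) : Prop := projective_over (E I) I.

Definition quadratic_ext (R S : Q -> Prop) : Prop :=
  (forall x, R x -> S x) /\
  forall x y, S x -> S y ->
    exists a b c, [/\ R a, R b, R c & x * y = x * a + y * b + c].

Definition prod_set (I J : Q -> Prop) : Q -> Prop := fun x =>
  exists l : seq (Q * Q),
    (forall p, p \in l -> I p.1 /\ J p.2) /\ x = \sum_(p <- l) p.1 * p.2.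

Definition sum_set (I J : Q -> Prop) : Q -> Prop := fun x =>
  exists a b, [/\ I a, J b & x = a + b].

Definition principal_ideal (A I : Q -> Prop) : Prop :=
  ideal_of A I /\ exists m, A m /\ same_set I (fun x => exists r, A r /\ x = m * r).

End Defs.

(* Main.v *)
Require Import Defs.
From HB Require Import structures.
From mathcomp Require Import all_boot all_order all_algebra ring.
From mathcomp Require classical_sets.
From Stdlib Require Import Classical ClassicalEpsilon FunctionalExtensionality.
Import GRing.Theory.
Local Open Scope ring_scope.

Lemma In_seqmap (A B : Type) (F : A -> B) (l : seq A) y :
  List.In y (map F l) -> exists x, List.In x l /\ y = F x.
Proof.
elim: l => [|a l IH] //= [<-|H]; first by exists a; split; [left|].
by have [x [Hx ->]] := IH H; exists x; split; [right|].
Qed.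

Lemma In_mem (T : eqType) (x : T) (s : seq T) : x \in s -> List.In x s.
Proof.
elim: s => [|a s IH] //; rewrite in_cons => /orP [/eqP ->|H]; first by left.
by right; apply: IH.
Qed.

Lemma sum_in (Q : comNzRingType) (I : Q -> Prop) (A : Type) (l : seq A) (F : A -> Q) :
  I 0 -> (forall x y, I x -> I y -> I (x + y)) ->
  (forall p, List.In p l -> I (F p)) -> I (\sum_(p <- l) F p).
Proof.
move=> I0 Iadd; elim: l => [|a l IH] H; first by rewrite big_nil.
rewrite big_cons; apply: Iadd; first by apply: H; left.
by apply: IH => p Hp; apply: H; right.
Qed.

Lemma sum_eq_In (Q : comNzRingType) (A : Type) (l : seq A) (F G : A -> Q) :
  (forall p, List.In p l -> F p = G p) -> \sum_(p <- l) F p = \sum_(p <- l) G p.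
Proof.
elim: l => [|a l IH] H; first by rewrite !big_nil.
rewrite !big_cons H; last by left.
by rewrite IH // => p Hp; apply: H; right.
Qed.

Lemma modinv (Q : comNzRingType) (A N : Q -> Prop) :
  subring A -> maximal_ideal A N -> forall a, A a -> ~ N a ->
  exists b m, [/\ A b, N m & a * b = 1 + m].
Proof.
move=> [A0 A1 Aadd Aopp Amul] [[[NA N0 Nadd Nmul] N1] Nmax] a Aa Na.
pose J := fun x => exists n s, [/\ N n, A s & x = n + a * s].
have JI : ideal_of A J.
  split.
  - by move=> x [n [s [Nn As ->]]]; apply: Aadd; [apply: NA|apply: Amul].
  - by exists 0, 0; split => //; rewrite mulr0 addr0.
  - move=> x y [n [s [Nn As ->]]] [n' [s' [Nn' As' ->]]].
    exists (n + n'), (s + s'); split; [exact: Nadd|exact: Aadd|ring].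
  - move=> b x Ab [n [s [Nn As ->]]]; exists (b * n), (b * s); split;
      [exact: Nmul|exact: Amul|ring].
case: (classic (J 1)) => [[n [s [Nn As E1]]]|J1].
  exists s, (- n); split => //; first (have -> : - n = (-1) * n by ring).
  by apply: Nmul => //; apply: Aopp.
  by rewrite E1; ring.
have sJ : same_set J N.
  apply: Nmax; first by split.
  by move=> x Nx; exists x, 0; split => //; rewrite mulr0 addr0.
exfalso; apply: Na; apply/(sJ a).
by exists 0, 1; split => //; rewrite mulr1 add0r.
Qed.

Lemma unit_of_local (Q : comNzRingType) (A N : Q -> Prop) :
  subring A -> maximal_ideal A N ->
  (forall N', maximal_ideal A N' -> same_set N' N) ->
  forall a, A a -> ~ N a -> exists b, A b /\ a * b = 1.
Proof.
move=> [A0 A1 Aadd Aopp Amul] hN huniq a Aa Na.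
apply: NNPP => H.
pose P := fun X : Q -> Prop => [/\ (forall x, X x -> A x),
  (forall x y, X x -> X y -> X (x + y)), (forall s x, A s -> X x -> X (s * x)),
  ~ X 1 & (forall x, X x -> X a)].
have [X0 [PX0 X0max]] : exists X0, P X0 /\ forall B, classical_sets.proper X0 B -> ~ P B.
  apply: (@classical_sets.Zorn_bigcup Q P) => F FP Ftot.
  split.
  - by move=> x [X FX Xx]; case: (FP X FX) => XA _ _ _ _; exact: XA.
  - move=> x y [X FX Xx] [Y FY Yy].
    case: (Ftot X Y FX FY) => [XY|YX].
    + exists Y => //; case: (FP Y FY) => _ Yadd _ _ _; apply: Yadd => //; exact: XY.
    + exists X => //; case: (FP X FX) => _ Xadd _ _ _; apply: Xadd => //; exact: YX.
  - move=> s x As [X FX Xx]; exists X => //; case: (FP X FX) => _ _ Xm _ _; exact: Xm.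
  - by move=> [X FX Xx]; case: (FP X FX) => _ _ _ X1 _.
  - move=> x [X FX Xx]; exists X => //; case: (FP X FX) => _ _ _ _ Xa; exact: (Xa x Xx).
case: PX0 => XA Xadd Xmul X1 Xa.
pose aA := fun x => exists s, A s /\ x = a * s.
have PaA : P aA.
  split.
  - by move=> x [s [As ->]]; apply: Amul.
  - by move=> x y [s [As ->]] [t [At ->]]; exists (s + t); split; [apply: Aadd|ring].
  - by move=> t x At [s [As ->]]; exists (t * s); split; [apply: Amul|ring].
  - by move=> [s [As Es]]; apply: H; exists s; split.
  - by move=> x _; exists 1; split; [|rewrite mulr1].
have X0a : X0 a.
  apply: NNPP => nXa; apply: (X0max aA _ PaA); split.
  - by move=> x Xx; exfalso; apply: nXa; exact: (Xa x Xx).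
  - by move=> sub; apply: nXa; apply: sub; exists 1; split; [|rewrite mulr1].
have X0max' : maximal_ideal A X0.
  split.
    split => //; split => //.
    by have := Xmul 0 a A0 X0a; rewrite mul0r.
  move=> J [[JA J0 Jadd Jmul] J1] XJ.
  have JX : forall x, J x -> X0 x.
    apply: NNPP => nsub.
    apply: (X0max J _ (And5 JA Jadd (fun s x As Jx => Jmul s x As Jx) J1 (fun x _ => XJ a X0a))).
    by split.
  by move=> x; split; [apply: JX|apply: XJ].
by apply: Na; apply/(huniq X0 X0max' a).
Qed.

Lemma beta_decomp (Q : comNzRingType) (S I : Q -> Prop) (J : Type)
  (beta : (J -> Q) -> Q) :
  subring S -> I 0 ->
  (forall f, free_elt S f -> I (beta f)) ->
  (forall f g, free_elt S f -> free_elt S g ->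
     beta (fun j => f j + g j) = beta f + beta g) ->
  (forall s f, S s -> free_elt S f -> beta (fun j => s * f j) = s * beta f) ->
  forall f, free_elt S f -> exists l : seq (J * Q),
    (forall p, List.In p l -> I p.2) /\ beta f = \sum_(p <- l) f p.1 * p.2.
Proof.
move=> [S0 S1 Sadd Sopp Smul] I0 bI badd bsc f [Sf [n [e esupp]]].
suff key : forall s : list J, forall f, (forall j, S (f j)) ->
    (forall j, (forall i, e i <> j) -> f j = 0) ->
    (forall j, ~ List.In j s -> f j = 0) ->
    exists l : seq (J * Q),
    (forall p, List.In p l -> I p.2) /\ beta f = \sum_(p <- l) f p.1 * p.2.
  apply: (key (List.map e (enum 'I_n))) => // j nIn; apply: esupp => i eij.
  apply: nIn; rewrite -eij; apply: List.in_map; apply: In_mem; exact: mem_enum.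
clear esupp Sf f.
elim => [|a s IH] f Sf fsupp fs.
  exists [::]; split => //; rewrite big_nil.
  have fr : free_elt S f by split => //; exists n, e.
  have -> : f = (fun j => 0 * f j).
    by apply: functional_extensionality => j; rewrite mul0r fs.
  by rewrite bsc // mul0r.
pose dec := fun j => excluded_middle_informative (j = a).
pose d := fun j => if dec j then (1 : Q) else 0.
pose g := fun j => if dec j then 0 else f j.
have dfr : free_elt S d.
  split; first by move=> j; rewrite /d; destruct (dec j).
  exists 1%N, (fun _ => a) => j H; rewrite /d; destruct (dec j) as [ja|nja]; last by [].
  by exfalso; apply: (H ord0); rewrite ja.
have hfr : free_elt S (fun j => f a * d j).
  split; first by move=> j; apply: Smul => //; case: dfr => Sd _; exact: Sd.
  exists 1%N, (fun _ => a) => j H; rewrite /d; destruct (dec j) as [ja|nja].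
    by exfalso; apply: (H ord0); rewrite ja.
  by rewrite mulr0.
have gfr : free_elt S g.
  split; first by move=> j; rewrite /g; destruct (dec j) as [ja|nja]; [|apply: Sf].
  by exists n, e => j H; rewrite /g; destruct (dec j) as [ja|nja]; [|apply: fsupp].
have fE : f = (fun j => f a * d j + g j).
  apply: functional_extensionality => j; rewrite /d /g; destruct (dec j) as [->|nja].
    by rewrite mulr1 addr0.
  by rewrite mulr0 add0r.
have [lg [lgI lgE]] : exists l : seq (J * Q),
    (forall p, List.In p l -> I p.2) /\ beta g = \sum_(p <- l) g p.1 * p.2.
  apply: IH.
  - by move=> j; rewrite /g; destruct (dec j) as [ja|nja]; [|apply: Sf].
  - by move=> j H; rewrite /g; destruct (dec j) as [ja|nja]; [|apply: fsupp].
  - move=> j H; rewrite /g; destruct (dec j) as [ja|nja]; first by [].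
    by apply: fs => -[aj|Hin]; [exact: nja (esym aj)|exact: H Hin].
exists ((a, beta d) :: map (fun p => (p.1, if dec p.1 then 0 else p.2)) lg).
split.
  move=> p [<-|Hp]; first by apply: bI.
  have Hp2 : List.In p (map (fun p : J * Q => (p.1, if dec p.1 then 0 else p.2)) lg) := Hp.
  have [q [Hq ->]] := In_seqmap _ _ _ _ _ Hp2; rewrite /=; destruct (dec q.1) as [qa|nqa]; [exact: I0|exact: lgI].
rewrite {1}fE (badd _ _ hfr gfr) (bsc _ _ (Sf a) dfr) lgE big_cons big_map /=.
rewrite /d; destruct (dec a) as [_|naa]; last by [].
congr (_ + _); apply: eq_bigr => p _ /=; rewrite /g.
destruct (dec p.1); by rewrite ?mulr0 ?mul0r.
Qed.

Arguments unit_of_local {Q A N}.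
Arguments modinv {Q A N}.
Arguments beta_decomp {Q S I J beta}.

Ltac rc Radd Rmul Ropp := repeat first [assumption | apply Radd | apply Rmul | apply Ropp].

Theorem lemma3p10 (Q : comNzRingType) (R M M1 : Q -> Prop)
  (hQ : total_quotient_ring R)
  (hRloc : local_ring R) (hM : maximal_ideal R M)
  (hMreg : regular_ideal R M) (hMst : stable M)
  (hquad : quadratic_ext R (E M))
  (hR1loc : local_ring (E M)) (hM1 : maximal_ideal (E M) M1) :
  (~ same_set (E M) (E M1) ->
     [/\ same_set M1 (prod_set M (E M1)), stable M1 & same_set (E M) (sum_set R M1)]) /\
  (same_set (E M) (E M1) ->
     principal_ideal (E M) M1 /\
     forall x, E M x -> ~ R x ->
       same_set (E M) (fun y => exists a b, [/\ R a, R b & y = a + x * b])).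
Proof.
case: (hQ) => Rsub Rinv _.
case: (Rsub) => R0 R1' Radd Ropp Rmul.
case: (hM) => [[[MR M0 Madd Mmul] Mn1] Mmax].
case: (hquad) => RR1 quad.
case: (hR1loc) => R1sub [M' [hM' uM']].
case: (R1sub) => E0 E1 Eadd Eopp Emul.
case: (hM1) => [[[M1E M10 M1add M1mul] M1n1] M1max].
have uniq1 : forall N, maximal_ideal (E M) N -> same_set N M1.
  move=> N hN x; split => H.
    by apply: (proj2 (uM' M1 hM1 x)); apply: (proj1 (uM' N hN x)).
  by apply: (proj2 (uM' N hN x)); apply: (proj1 (uM' M1 hM1 x)).
have U1 := unit_of_local R1sub hM1 uniq1.
have invR := modinv Rsub hM.
have MR1 : forall x, M x -> E M x by move=> x h; apply: RR1; apply: MR.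
have Mopp : forall x, M x -> M (- x).
  move=> x h; have -> : - x = (-1) * x by ring.
  by apply: Mmul => //; apply: Ropp.
have M1opp : forall x, M1 x -> M1 (- x).
  move=> x h; have -> : - x = (-1) * x by ring.
  by apply: M1mul => //; apply: Eopp.
have MM1 : forall x, M x -> M1 x.
  move=> x Mx; apply: NNPP => n; have [b [Eb e]] := U1 x (MR1 x Mx) n.
  by apply: Mn1; rewrite -e mulrC; apply: Eb.
have RM1M : forall x, R x -> M1 x -> M x.
  move=> x Rx M1x; apply: NNPP => n; have [b [m [Rb Mm e]]] := invR x Rx n.
  apply: M1n1; have -> : (1 : Q) = b * x + (-1) * m by rewrite (mulrC b) e; ring.
  apply: M1add; first by apply: M1mul => //; apply: RR1.
  by apply: M1mul; [apply: Eopp|apply: MM1].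
have [m [Mm [mi mmi] gen]] : exists m, [/\ M m, exists mi, m * mi = 1
    & forall x, M x -> exists s, E M s /\ x = m * s].
  case: hMreg => r0 [Mr0 nzr0].
  have [ri r0ri] := Rinv r0 nzr0.
  case: hMst => J [alpha [beta [[afree aadd asc] [bI badd bsc bab]]]].
  have aE : forall x, M x -> forall j, alpha x j = ri * (x * alpha r0 j).
    move=> x Mx j.
    have h1 := asc x r0 (MR1 x Mx) Mr0 j.
    have h2 := asc r0 x (MR1 r0 Mr0) Mx j.
    rewrite (mulrC r0 x) h1 in h2.
    by rewrite h2 mulrA (mulrC ri r0) r0ri mul1r.
  have [l [lM lE]] := beta_decomp R1sub M0 bI badd bsc (alpha r0) (afree r0 Mr0).
  have one : (1 : Q) = \sum_(p <- l) alpha p.2 p.1.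
    rewrite -r0ri mulrC -{1}(bab r0 Mr0) lE big_distrr /=.
    apply: sum_eq_In => p Hp.
    by rewrite (aE p.2); [ring|exact: lM].
  have [p [Hp Hnot]] : exists p, List.In p l /\ ~ M1 (alpha p.2 p.1).
    apply: NNPP => H; apply: M1n1; rewrite one; apply: sum_in => // q Hq.
    by apply: NNPP => Hn; apply: H; exists q; split.
  have Ew : E M (alpha p.2 p.1) by case: (afree p.2 (lM p Hp)) => h _; apply: h.
  have [w' [Ew' ww']] := U1 _ Ew Hnot.
  have gen : forall x, M x -> exists s, E M s /\ x = p.2 * s.
    move=> x Mx; exists (alpha x p.1 * w'); split.
      by apply: Emul => //; case: (afree x Mx) => h _; apply: h.
    rewrite (aE p.2 (lM p Hp)) in ww'; rewrite (aE x Mx).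
    have -> : p.2 * (ri * (x * alpha r0 p.1) * w') = x * (ri * (p.2 * alpha r0 p.1) * w') by ring.
    by rewrite ww' mulr1.
  exists p.2; split => //; first exact: lM.
  have [s0 [Es0 e0]] := gen r0 Mr0.
  by exists (s0 * ri); rewrite mulrA -e0 r0ri.
have Mdiv : forall z, M z -> E M (z * mi).
  by move=> z Mz; have [s [Es ->]] := gen z Mz; rewrite mulrAC mmi mul1r.
have gen' : forall s, E M s -> M (m * s) by move=> s Es; rewrite mulrC; apply: (Es).
have M1sub : forall x y, M1 x -> M1 y -> M1 (x - y).
  by move=> x y hx hy; apply: (M1add) => //; apply: (M1opp).
have Msub : forall x y, M x -> M y -> M (x - y).
  by move=> x y hx hy; apply: (Madd) => //; apply: (Mopp).
have M1R : forall a x, E M a -> M1 x -> M1 (x * a).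
  by move=> a x ha hx; rewrite mulrC; apply: (M1mul).
case: (classic (exists t, E M t /\ forall a, R a -> ~ M1 (t - a))) => [[t [Et tA]]|nA].
- have M1M : forall u, M1 u -> M u.
    move=> u M1u.
    have [a [b [c [Ra Rb Rc e]]]] := quad u t (M1E u M1u) Et.
    have h1 : M1 (t * b + c).
      have -> : t * b + c = u * t - u * a by rewrite e; ring.
      by apply: (M1sub); [rewrite mulrC; apply: (M1mul)|apply: (M1R) => //; apply: (RR1)].
    have Mb : M b.
      apply: (NNPP) => nb; have [b' [m' [Rb' Mm' e']]] := invR b Rb nb.
      apply: (tA (- (c * b'))); first by apply: (Ropp); apply: (Rmul).
      have -> : t - - (c * b') = b' * (t * b + c) + (-1) * (t * m') + t * (1 + m' - b * b') by ring.
      rewrite e' subrr mulr0 addr0.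
      apply: (M1add); first by apply: (M1mul) => //; apply: (RR1).
      by apply: (M1mul); [apply: (Eopp)|apply: (M1mul) => //; apply: (MM1)].
    have Mc : M c.
      apply: (RM1M) => //; have -> : c = (t * b + c) - t * b by ring.
      by apply: (M1sub) => //; apply: (M1mul) => //; apply: (MM1).
    have hut : M (u * (t - a)).
      have -> : u * (t - a) = t * b + c by rewrite mulrBr e; ring.
      by apply: (Madd) => //; apply: (Et).
    have Eta : E M (t - a) by apply: (Eadd) => //; apply: (Eopp); apply: (RR1).
    have [w [Ew ew]] := U1 _ Eta (tA a Ra).
    have -> : u = w * (u * (t - a)) by rewrite mulrCA (mulrC w) ew mulr1.
    by apply: (Ew).
  have EE : same_set (E M) (E M1).
    move=> q; split => hq z hz; first by apply: (MM1); apply: (hq); apply: (M1M).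
    by apply: (M1M); apply: (hq); apply: (MM1).
  split; first by move=> H; exfalso; apply: (H).
  move=> _; split.
    split; first by split.
    exists m; split; first by apply: (MR1).
    move=> z; split; first by move=> hz; apply: (gen); apply: (M1M).
    by move=> [r [Er ->]]; apply: (MM1); apply: (gen').
  move=> x Ex nRx.
  have xA : forall a, R a -> ~ M1 (x - a).
    move=> a Ra h; apply: (nRx); have -> : x = (x - a) + a by ring.
    by apply: (Radd) => //; apply: (MR); apply: (M1M).
  move=> y; split; last first.
    by move=> [a [b [Ra Rb ->]]]; apply: (Eadd); [apply: (RR1)|apply: (Emul) => //; apply: (RR1)].
  move=> Ey.
  have [a [b [c [Ra Rb Rc H1]]]] := quad x y Ex Ey.
  pose z := x - b.
  have Ez : E M z by apply: (Eadd) => //; apply: (Eopp); apply: (RR1).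
  have [a1 [b1 [c1 [Ra1 Rb1 Rc1 H2]]]] := quad z z Ez Ez.
  have [a2 [b2 [c2 [Ra2 Rb2 Rc2 H3]]]] := quad x x Ex Ex.
  have e2 : z * (z - (a1 + b1)) = c1.
    have -> : z * (z - (a1 + b1)) = (z * z - (z * a1 + z * b1 + c1)) + c1 by ring.
    by rewrite H2 subrr add0r.
  have nMc1 : ~ M c1.
    move=> Mc1.
    have [zi [Ezi zzi]] := U1 z Ez (xA b Rb).
    apply: (xA (b + (a1 + b1))); first by apply: (Radd) => //; apply: (Radd).
    have -> : x - (b + (a1 + b1)) = zi * (z * (z - (a1 + b1))) + (z - (a1 + b1)) * (1 - z * zi) by rewrite /z; ring.
    by rewrite zzi subrr mulr0 addr0 e2; apply: (MM1); apply: (Ezi).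
  have [q' [m' [Rq' Mm' e']]] := invR c1 Rc1 nMc1.
  have e1 : y * z = x * a + c.
    have -> : y * z = (x * y - (x * a + y * b + c)) + x * a + c by rewrite /z; ring.
    by rewrite H1 subrr add0r.
  have e3 : y + y * m' = (x * a + c) * (z - (a1 + b1)) * q'.
    have -> : y + y * m' = y * (1 + m') by ring.
    by rewrite -e' -e2 -e1; ring.
  pose d := b + (a1 + b1).
  exists ((a * c2 - c * d) * q' - y * m'), ((a * (a2 + b2) + c - a * d) * q').
  split.
  - apply: (Radd); last by apply: (Ropp); apply: (MR); apply: (Ey).
    rewrite /d; rc Radd Rmul Ropp.
  - rewrite /d; rc Radd Rmul Ropp.
  - have -> : (a * c2 - c * d) * q' - y * m' + x * ((a * (a2 + b2) + c - a * d) * q')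
      = (x * a + c) * (z - (a1 + b1)) * q' - y * m' - a * q' * (x * x - (x * a2 + x * b2 + c2)) by rewrite /z /d; ring.
    by rewrite H3 subrr mulr0 subr0 -e3; ring.
have hB : forall t, E M t -> exists a, R a /\ M1 (t - a).
  move=> t Et; apply: (NNPP) => H; apply: (nA); exists t; split => // a Ra M1ta.
  by apply: (H); exists a; split.
have sq : forall u, M1 u -> M (u * u).
  move=> u hu; have Eu := M1E u hu.
  have [a [b [c [Ra Rb Rc e]]]] := quad u u Eu Eu.
  have Mc : M c.
    apply: (RM1M) => //; have -> : c = u * u - u * (a + b) by rewrite e; ring.
    by apply: (M1sub); [apply: (M1mul)|apply: (M1R) => //; apply: (RR1); apply: (Radd)].
  case: (classic (M (a + b))) => hab.
    by rewrite e -mulrDr; apply: (Madd) => //; apply: (Eu).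
  have nab : ~ M1 (u - (a + b)).
    move=> h; apply: (hab); apply: (RM1M); first by apply: (Radd).
    have -> : a + b = u - (u - (a + b)) by ring.
    by apply: (M1sub).
  have Eab : E M (u - (a + b)) by apply: (Eadd) => //; apply: (Eopp); apply: (RR1); apply: (Radd).
  have [w [Ew ew]] := U1 _ Eab nab.
  have Mu : M u.
    have -> : u = w * (u * (u - (a + b))) by rewrite mulrCA (mulrC w) ew mulr1.
    have -> : u * (u - (a + b)) = c by rewrite mulrBr e; ring.
    by apply: (Ew).
  by apply: (Eu).
have key : forall u v a b c, M1 u -> M1 v -> R a -> R b -> M c ->
    u * v = u * a + v * b + c -> ~ M b -> M (u * v).
  move=> u v a b c hu hv Ra Rb Mc e nb.
  have Eu := M1E u hu; have Ev := M1E v hv.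
  have h : M ((u * v) * b).
    have -> : (u * v) * b = v * (u * u) - a * (u * u) - u * c - u * (u * v - (u * a + v * b + c)) by ring.
    rewrite -e subrr mulr0 subr0.
    apply: (Msub); last by apply: (Eu).
    by apply: (Msub); [apply: (Ev); apply: (sq)|apply: (Mmul) => //; apply: (sq)].
  have [b' [m' [Rb' Mm' e']]] := invR b Rb nb.
  have -> : u * v = b' * ((u * v) * b) - (u * v) * m' + u * v * (1 + m' - b * b') by ring.
  rewrite e' subrr mulr0 addr0.
  apply: (Msub); first by apply: (Mmul).
  have Euv : E M (u * v) by apply: (Emul).
  by apply: (Euv).
have B1 : forall u v, M1 u -> M1 v -> M (u * v).
  move=> u v hu hv; have Eu := M1E u hu; have Ev := M1E v hv.
  have [a [b [c [Ra Rb Rc e]]]] := quad u v Eu Ev.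
  have Mc : M c.
    apply: (RM1M) => //; have -> : c = u * v - u * a - v * b by rewrite e; ring.
    apply: (M1sub); last by apply: (M1R) => //; apply: (RR1).
    by apply: (M1sub); [apply: (M1mul)|apply: (M1R) => //; apply: (RR1)].
  case: (classic (M b)) => hb; last by apply: (key u v a b c).
  case: (classic (M a)) => ha.
    by rewrite e; apply: (Madd) => //; apply: (Madd); [apply: (Eu)|apply: (Ev)].
  rewrite mulrC; apply: (key v u b a c) => //.
  by rewrite mulrC e; ring.
case: (classic (exists u v, [/\ M1 u, M1 v & ~ M1 (u * v * mi)])) => [[u [v [hu hv ns]]]|nB2].
- have Eu := M1E u hu.
  have Es : E M (u * v * mi) by apply: (Mdiv); apply: (B1).
  have [w [Ew sw]] := U1 _ Es ns.
  have uinv : u * (v * mi * w) = 1 by rewrite -sw; ring.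
  have gen1 : forall z, M1 z -> exists r, E M r /\ z = u * r.
    move=> z hz; exists (z * v * mi * w); split.
      by apply: (Emul) => //; apply: (Mdiv); apply: (B1).
    have -> : u * (z * v * mi * w) = z * (u * (v * mi * w)) by ring.
    by rewrite uinv mulr1.
  have EE : same_set (E M) (E M1).
    move=> x; split => hx; first by move=> z hz; apply: (M1mul).
    have [r [Er e]] := gen1 (x * u) (hx u hu).
    have -> : x = (x * u) * (v * mi * w) by rewrite -mulrA uinv mulr1.
    rewrite e; have -> : u * r * (v * mi * w) = r * (u * (v * mi * w)) by ring.
    by rewrite uinv mulr1.
  split; first by move=> H; exfalso; apply: H.
  move=> _; split.
    split; first by split.
    exists u; split => // z; split; first by apply: (gen1).
    by move=> [r [Er ->]]; apply: (M1R).
  have dec : forall t, E M t -> exists a b, [/\ R a, R b & t = a + u * b].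
    move=> t Et; have [a [Ra M1ta]] := hB t Et.
    have [s1 [Es1 es1]] := gen1 (t - a) M1ta.
    have [a1 [Ra1 M1nn1]] := hB s1 Es1.
    exists (a + u * (s1 - a1)), a1; split => //.
      by apply: (Radd) => //; apply: (MR); apply: (B1).
    have -> : a + u * (s1 - a1) + u * a1 = a + u * s1 by ring.
    by rewrite -es1; ring.
  move=> x Ex nRx y; split; last first.
    by move=> [a [b [Ra Rb ->]]]; apply: (Eadd); [apply: (RR1)|apply: (Emul) => //; apply: (RR1)].
  move=> Ey.
  have [a0 [b0 [Ra0 Rb0 ex]]] := dec x Ex.
  have nMb0 : ~ M b0.
    by move=> Mb0; apply: nRx; rewrite ex; apply: (Radd) => //; apply: (MR); apply: (Eu).
  have [b' [m' [Rb' Mm' e']]] := invR b0 Rb0 nMb0.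
  have [a [b [Ra Rb ey]]] := dec y Ey.
  exists (a - a0 * b' * b - b * (u * m')), (b' * b); split.
  - apply: (Radd); last by apply: (Ropp); apply: (MR); apply: (Mmul) => //; apply: (Eu).
    by apply: (Radd) => //; apply: (Ropp); rc Radd Rmul Ropp.
  - by apply: (Rmul).
  - rewrite ey ex.
    have -> : (a0 + u * b0) * (b' * b) = a0 * b' * b + u * b * (b0 * b') by ring.
    by rewrite e'; ring.
have hB2 : forall u v, M1 u -> M1 v -> M1 (u * v * mi).
  move=> u v hu hv; apply: NNPP => h; by apply: nB2; exists u, v; split.
have EM1mi : forall z, M1 z -> E M1 (mi * z).
  move=> z hz x hx; have -> : mi * z * x = z * x * mi by ring.
  by apply: (hB2).
split.
  move=> _; split.
  - move=> z; split.
      move=> hz; exists [:: (m, mi * z)]; split.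
        by move=> p; rewrite inE => /eqP -> /=; split; [|apply: (EM1mi)].
      by rewrite big_cons big_nil /= addr0 mulrA mmi mul1r.
    move=> [l [lH ->]]; rewrite big_seq.
    apply: (big_ind (fun x => M1 x)) => //.
    move=> p hp; case: (lH p hp) => h1 h2; rewrite mulrC; apply: (h2); exact: (MM1 _ h1).
  - exists unit, (fun x _ => mi * x), (fun f => m * f tt); split; split.
    + move=> x hx; split; first by move=> _; apply: (EM1mi).
      by exists 1%N, (fun _ => tt) => j H; exfalso; case: j H => H; apply: (H ord0).
    + by move=> x y _ _ j; rewrite mulrDr.
    + by move=> s x _ _ j; rewrite mulrCA.
    + move=> f [fE _]; rewrite mulrC; apply: (fE tt); exact: (MM1 _ Mm).
    + by move=> f g _ _; rewrite mulrDr.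
    + by move=> s f _ _; rewrite mulrCA.
    + by move=> x _; rewrite mulrA mmi mul1r.
  - move=> y; split.
      move=> Ey; have [a [Ra h]] := hB y Ey; exists a, (y - a); split => //; ring.
    by move=> [a [b [Ra M1b ->]]]; apply: (Eadd); [apply: (RR1)|apply: (M1E)].
move=> EE.
have M1M : forall u, M1 u -> M u.
  move=> u hu; have Emu : E M (mi * u) by apply/(EE (mi * u)); apply: (EM1mi).
  have -> : u = (mi * u) * m by rewrite mulrC mulrA mmi mul1r.
  by apply: (Emu).
split.
  split; first by split.
  exists m; split; first by apply: (MR1).
  move=> z; split; first by move=> hz; apply: (gen); apply: (M1M).
  by move=> [r [Er ->]]; apply: (MM1); apply: (gen').
move=> x Ex nRx; exfalso.
have [a [Ra h]] := hB x Ex; apply: nRx.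
have -> : x = (x - a) + a by ring.
by apply: (Radd) => //; apply: (MR); apply: (M1M).
Qed.
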